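(* Let $A$ be a deterministic parity tree automaton and $p$ a state of $A$. Then $p$ occurs in infinitely many pairwise incomparable (with respect to the prefix order) nodes of some accepting run of $A$ if and only if $p$ is productive and $p$ is replicated by an accepting loop.
   Context: Deterministic parity tree automata: total $\delta:Q\times\Sigma\to Q\times Q$, edges $q\xrightarrow{\sigma,d}q'$ with direction $d\in\{0,1\}$. A run is accepting if on every path the highest rank occurring infinitely often is even. A state is productive if it occurs in some accepting run. A loop is a path from a state back to itself; it is accepting iff the maximal rank on it is even. A state $p$ is replicated by a loop $q_1\xrightarrow{\sigma,d_0}q_2\to\cdots\to q_1$ if there exists a path $q_1\xrightarrow{\sigma,d_1}q_2'\to\cdots\to p$ with $d_1\ne d_0$ (same first letter, other direction). We assume (as a standing convention) that all states reachable in the automaton are productive except possibly one all-rejecting state $\bot$, and every transition is either used in an accepting run or has the form $q\xrightarrow{\sigma}\bot,\bot$. *)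

(* Defs.v *)
From mathcomp Require Import all_boot.
Set Implicit Arguments. Unset Strict Implicit. Unset Printing Implicit Defensive.

(* Direction 0 is [false] (left child), direction 1 is [true] (right child). *)
Record dpta (Q S : finType) := DPTA {
  init  : Q;
  delta : Q -> S -> Q * Q;
  rank  : Q -> nat }.

Section DPTA.
Variables (Q S : finType) (A : dpta Q S).

Definition node := seq bool.

Definition run_from (q : Q) (t : node -> S) (r : node -> Q) : Prop :=
  r [::] = q /\
  forall w : node, delta A (r w) (t w) = (r (rcons w false), r (rcons w true)).

Definition path_node (pi : nat -> bool) (n : nat) : node := [seq pi i | i <- iota 0 n].

Definition path_accepting (r : node -> Q) (pi : nat -> bool) : Prop :=
  exists m : nat, ~~ odd m /\
    (forall N, exists n, N <= n /\ rank A (r (path_node pi n)) = m) /\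
    (exists N, forall n, N <= n -> rank A (r (path_node pi n)) <= m).

Definition run_accepting (r : node -> Q) : Prop :=
  forall pi : nat -> bool, path_accepting r pi.

Definition accepting_run (t : node -> S) (r : node -> Q) : Prop :=
  run_from (init A) t r /\ run_accepting r.

Definition productive (p : Q) : Prop :=
  exists (t : node -> S) (r : node -> Q) (w : node), accepting_run t r /\ r w = p.

Definition transition_used (q : Q) (sigma : S) : Prop :=
  exists (t : node -> S) (r : node -> Q) (w : node),
    accepting_run t r /\ r w = q /\ t w = sigma.

Definition step (q : Q) (e : S * bool) : Q :=
  if e.2 then (delta A q e.1).2 else (delta A q e.1).1.

Definition path_end (q : Q) (s : seq (S * bool)) : Q := foldl step q s.

Definition is_loop (q : Q) (s : seq (S * bool)) : Prop :=
  s != [::] /\ path_end q s = q.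

Definition loop_accepting (q : Q) (s : seq (S * bool)) : Prop :=
  ~~ odd (\max_(x <- scanl step q s) rank A x).

Definition replicated_by (p q : Q) (sigma : S) (d0 : bool) (s : seq (S * bool)) : Prop :=
  exists s' : seq (S * bool), path_end q ((sigma, ~~ d0) :: s') = p.

Definition replicated_by_accepting_loop (p : Q) : Prop :=
  exists (q : Q) (sigma : S) (d0 : bool) (s : seq (S * bool)),
    is_loop q ((sigma, d0) :: s) /\ loop_accepting q ((sigma, d0) :: s) /\
    replicated_by p q sigma d0 s.

Definition standing_convention : Prop :=
  exists bot : Q,
    (forall q : Q, q <> bot -> productive q) /\
    (forall (q : Q) (sigma : S), transition_used q sigma \/ delta A q sigma = (bot, bot)).

Definition occurs_inf_incomparable (r : node -> Q) (p : Q) : Prop :=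
  exists f : nat -> node,
    (forall i, r (f i) = p) /\
    (forall i j, i <> j -> ~~ prefix (f i) (f j)).

End DPTA.

(* Main.v *)
Require Import Defs.
From mathcomp Require Import all_boot.
From Stdlib Require Import ClassicalEpsilon FunctionalExtensionality Classical.

Definition accs (g : nat -> nat) : Prop :=
  exists m : nat, ~~ odd m /\
    (forall N, exists n, N <= n /\ g n = m) /\
    (exists N, forall n, N <= n -> g n <= m).

Lemma accs_shift (k : nat) (g : nat -> nat) : accs g <-> accs (fun n => g (k + n)).
Proof.
split.
- move=> [m [hm [hi [N hN]]]]; exists m; split=> //; split.
  + move=> M; have [n [hn gn]] := hi (k + M).
    exists (n - k); split; first by rewrite leq_subRL // (leq_trans (leq_addr _ _) hn).
    by rewrite subnKC // (leq_trans (leq_addr _ _) hn).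
  + exists N => n hn; apply: hN; exact: leq_trans hn (leq_addl _ _).
- move=> [m [hm [hi [N hN]]]]; exists m; split=> //; split.
  + move=> M; have [n [hn gn]] := hi M.
    exists (k + n); split=> //; exact: leq_trans hn (leq_addl _ _).
  + exists (k + N) => n hn.
    have hk : k <= n by exact: leq_trans (leq_addr _ _) hn.
    rewrite -(subnKC hk); apply: hN; by rewrite leq_subRL.
Qed.

Lemma path_node_split (pi : nat -> bool) a k :
  path_node pi (a + k) = path_node pi a ++ path_node (fun j => pi (a + j)) k.
Proof.
rewrite /path_node iotaD map_cat add0n; congr (_ ++ _).
by rewrite -[a in iota a _]addn0 iotaDl -map_comp.
Qed.

Lemma path_node_S (pi : nat -> bool) k :
  path_node pi k.+1 = pi 0 :: path_node (fun j => pi j.+1) k.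
Proof. by rewrite -add1n path_node_split. Qed.

Lemma path_node_rcons (pi : nat -> bool) k :
  path_node pi k.+1 = rcons (path_node pi k) (pi k).
Proof. by rewrite -addn1 path_node_split cats1 addn0. Qed.

Lemma size_path_node (pi : nat -> bool) k : size (path_node pi k) = k.
Proof. by rewrite /path_node size_map size_iota. Qed.

Lemma path_node_ext (pi pi' : nat -> bool) n :
  (forall k, k < n -> pi k = pi' k) -> path_node pi n = path_node pi' n.
Proof. move=> h; apply/eq_in_map => k; rewrite mem_iota add0n => /andP[_]; exact: h. Qed.

Fixpoint runof {Q S : finType} (A : dpta Q S) (x : Q) (t : node -> S) (v : node) : Q :=
  match v with
  | [::] => x
  | d :: w => runof A (step A x (t [::], d)) (fun u => t (d :: u)) w
  end.

Lemma runof_cat {Q S : finType} (A : dpta Q S) x t w1 w2 :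
  runof A x t (w1 ++ w2) = runof A (runof A x t w1) (fun u => t (w1 ++ u)) w2.
Proof. by elim: w1 x t => [|d w1 IH] x t //=; rewrite IH. Qed.

Lemma runof_rcons {Q S : finType} (A : dpta Q S) x t w d :
  runof A x t (rcons w d) = step A (runof A x t w) (t w, d).
Proof. by rewrite -cats1 runof_cat /= cats0. Qed.

Lemma runof_run {Q S : finType} (A : dpta Q S) x t : run_from A x t (runof A x t).
Proof.
split=> // w; rewrite !runof_rcons /step /=.
by case: (delta A _ _).
Qed.

Lemma run_runof {Q S : finType} (A : dpta Q S) x t r :
  run_from A x t r -> forall v, r v = runof A x t v.
Proof.
move=> [h0 h] v; elim/last_ind: v => [|w d IH] //.
rewrite runof_rcons -IH /step /= h; by case: d.
Qed.

Lemma run_step {Q S : finType} (A : dpta Q S) x t r w d :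
  run_from A x t r -> step A (r w) (t w, d) = r (rcons w d).
Proof. move=> [_ h]; rewrite /step /= h; by case: d. Qed.

Lemma run_path {Q S : finType} (A : dpta Q S) x t r :
  run_from A x t r -> forall w v, exists s, path_end A (r v) s = r (v ++ w).
Proof.
move=> hr; elim=> [|d w IH] v; first by exists [::]; rewrite cats0.
have [s hs] := IH (rcons v d).
exists ((t v, d) :: s); rewrite /path_end /= -/(path_end A _ _).
by rewrite (@run_step _ _ A x t r v d hr) hs cat_rcons.
Qed.

Lemma accepting_sub {Q S : finType} (A : dpta Q S) (r : node -> Q) w :
  run_accepting A r -> run_accepting A (fun u => r (w ++ u)).
Proof.
move=> h pi'.
pose pi := fun j => if j < size w then nth false w j else pi' (j - size w).
have e : forall k, path_node pi (size w + k) = w ++ path_node pi' k.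
  move=> k; rewrite path_node_split; congr (_ ++ _).
    rewrite -[RHS](mkseq_nth false) /path_node /mkseq; apply/eq_in_map => j.
    by rewrite mem_iota add0n /pi => /andP[_ ->].
  apply: path_node_ext => j _; by rewrite /pi ltnNge leq_addr /= addKn.
have := h pi; rewrite /path_accepting.
move/(accs_shift (size w)).
by under [X in accs X]functional_extensionality => n do rewrite e.
Qed.

Lemma prefix_proper (u v : node) : prefix u v -> u <> v -> exists b w, v = u ++ b :: w.
Proof.
move/prefixP=> [[|b w] ->]; first by rewrite cats0.
by move=> _; exists b, w.
Qed.

Lemma choice_fun {X Y : Type} (P : X -> Y -> Prop) : (forall x, exists y, P x y) ->
  exists f : X -> Y, forall x, P x (f x).
Proof.
move=> h; exists (fun x => proj1_sig (constructive_indefinite_description _ (h x))).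
move=> x; exact: proj2_sig (constructive_indefinite_description _ (h x)).
Qed.

Lemma pigeon {Q : finType} (B : nat -> Prop) (g : nat -> Q) :
  (forall N, exists n, N <= n /\ B n) ->
  exists q, forall N, exists n, N <= n /\ B n /\ g n = q.
Proof.
move=> h; apply: NNPP => hn.
have : forall q, exists N, forall n, N <= n -> ~ (B n /\ g n = q).
  move=> q; apply: NNPP => hq; apply: hn; exists q => N; apply: NNPP => hN.
  apply: hq; exists N => n hn' hb; apply: hN; exists n; tauto.
move/choice_fun=> [Nf hNf].
have [n [hn0 hB]] := h (\max_(q : Q) Nf q).
apply: (hNf (g n) n); last by split.
apply: leq_trans hn0; exact: leq_bigmax.
Qed.

Lemma forward {Q S : finType} (A : dpta Q S) p t r :
  accepting_run A t r -> occurs_inf_incomparable r p -> replicated_by_accepting_loop A p.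
Proof.
move=> [hrun hacc] [f [hfp hinc]].
pose inf u := forall M, exists i, M <= i /\ prefix u (f i).
have notfi : forall u i, inf u -> u <> f i.
  move=> u i hu e; have [j [hj hp]] := hu i.+1.
  have := hinc i j; rewrite -e hp => hij; suff : ~~ true by [].
  apply: hij => eij; by rewrite eij ltnn in hj.
have C1 : forall u, inf u -> inf (rcons u false) \/ inf (rcons u true).
  move=> u hu; apply: NNPP => hn.
  have h0 : ~ inf (rcons u false) by tauto.
  have h1 : ~ inf (rcons u true) by tauto.
  have [M0 hM0] : exists M, forall i, M <= i -> ~ prefix (rcons u false) (f i).
    apply: NNPP => hh; apply: h0 => M; apply: NNPP => hM; apply: hh; exists M => i hi hp.
    by apply: hM; exists i.
  have [M1 hM1] : exists M, forall i, M <= i -> ~ prefix (rcons u true) (f i).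
    apply: NNPP => hh; apply: h1 => M; apply: NNPP => hM; apply: hh; exists M => i hi hp.
    by apply: hM; exists i.
  have [i [hi hp]] := hu (maxn M0 M1).
  have [b [w e]] := prefix_proper _ _ hp (notfi u i hu).
  have hpb : prefix (rcons u b) (f i) by rewrite e -cat_rcons prefix_prefix.
  case: b {e} hpb => hpb.
    by apply: (hM1 i) => //; exact: leq_trans (leq_maxr _ _) hi.
  by apply: (hM0 i) => //; exact: leq_trans (leq_maxl _ _) hi.
pose dirf (u : node) : bool := if excluded_middle_informative (inf (rcons u true)) then true else false.
pose fix un n := match n with 0 => [::] | n'.+1 => rcons (un n') (dirf (un n')) end.
pose pi n := dirf (un n).
have pn : forall n, path_node pi n = un n.
  elim=> [|n IH] //; by rewrite path_node_rcons IH.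
have infun : forall n, inf (un n).
  elim=> [|n IH] /=.
    by move=> M; exists M; rewrite prefix0s.
  rewrite /dirf; case: excluded_middle_informative => // hn0.
  by case: (C1 _ IH).
have sizeun : forall n, size (un n) = n by move=> n; rewrite -pn size_path_node.
pose B n := exists i, prefix (rcons (un n) (~~ pi n)) (f i).
have C2 : forall N, exists n, N <= n /\ B n.
  move=> N; apply: NNPP => hn.
  have nB : forall n, N <= n -> ~ B n by move=> n hn' hb; apply: hn; exists n.
  have [i [_ hpi]] := infun N 0.
  have H : forall k, prefix (un (N + k)) (f i).
    elim=> [|k IH]; first by rewrite addn0.
    have [b [w e]] := prefix_proper _ _ IH (notfi _ i (infun _)).
    case: (eqVneq b (pi (N + k))) => hb.
      by rewrite addnS /= e hb -cat_rcons prefix_prefix.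
    exfalso; apply: (nB (N + k)); first exact: leq_addr.
    exists i; rewrite e -cat_rcons.
    have -> : b = ~~ pi (N + k) by clear e; move: hb; case: b; case: (pi _).
    exact: prefix_prefix.
  have := size_prefix (H (size (f i)).+1); rewrite sizeun.
  by rewrite -addSnnS ltnNge leq_addl.
have [qq hqq] := @pigeon _ B (fun n => r (un n)) C2.
have [m [hm [hinf [N0 hN0]]]] := hacc pi.
have [n1 [hn1 [[i hBi] hq1]]] := hqq N0.
have [k [hk hrk]] := hinf n1.+1.
have [n2 [hn2 [_ hq2]]] := hqq k.
rewrite pn in hrk.
have rankle : forall n, N0 <= n -> rank A (r (un n)) <= m by move=> n hn; rewrite -pn; exact: hN0.
pose lab := fun j => (t (un j), pi j).
have PE : forall len a, path_end A (r (un a)) [seq lab j | j <- iota a len] = r (un (a + len)).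
  elim=> [|len IH] a; first by rewrite addn0.
  rewrite /path_end /= -/(path_end A _ _) /lab.
  by rewrite (@run_step _ _ A _ t r (un a) (pi a) hrun) addnS -addSn; exact: IH a.+1.
have SC : forall len a, scanl (step A) (r (un a)) [seq lab j | j <- iota a len] =
      [seq r (un j) | j <- iota a.+1 len].
  elim=> [|len IH] a //=.
  rewrite /lab (@run_step _ _ A _ t r (un a) (pi a) hrun); congr (_ :: _); exact: IH a.+1.
have ltn12 : n1 < n2 by exact: leq_trans hk hn2.
set d := (n2 - n1).-1.
have hn2d : n2 = n1 + d.+1 by rewrite /d prednK ?subn_gt0 // subnKC // ltnW.
exists qq, (t (un n1)), (pi n1), [seq lab j | j <- iota n1.+1 d].
split; [split|split].
- done.
- rewrite -{1}hq1 -[in RHS]hq2 hn2d; exact: PE d.+1 n1.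
- rewrite /loop_accepting.
  rewrite -{1}hq1 (SC d.+1 n1) big_map.
  have -> : \max_(j <- iota n1.+1 d.+1) rank A (r (un j)) = m.
    apply/eqP; rewrite eqn_leq; apply/andP; split.
      apply/bigmax_leqP_seq => j; rewrite mem_iota => /andP[hj _] _.
      apply: rankle; exact: leq_trans hn1 (ltnW hj).
    rewrite -hrk; apply: (leq_bigmax_seq k) => //.
    by rewrite mem_iota hk /= addSn -hn2d ltnS.
  done.
- move: hBi => /prefixP[w e].
  have [s hs] := @run_path _ _ A _ t r hrun w (rcons (un n1) (~~ pi n1)).
  exists s; rewrite /path_end /= -/(path_end A _ _) -hq1.
  by rewrite (@run_step _ _ A _ t r (un n1) (~~ pi n1) hrun) hs -e.
Qed.

Lemma used_child {Q S : finType} (A : dpta Q S) x a b :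
  transition_used A x a -> productive A (step A x (a, b)).
Proof.
move=> [t [r [w [[hrun hacc] [hx ha]]]]].
exists t, r, (rcons w b); split; first by split.
by rewrite -(@run_step _ _ A _ t r w b hrun) hx ha.
Qed.

Lemma reach {Q S : finType} (A : dpta Q S) : standing_convention A ->
  forall s x, productive A (path_end A x s) -> productive A x.
Proof.
move=> [bot [hb ht]]; elim=> [|[a d] s IH] x //.
rewrite /path_end /= -/(path_end A _ _) => /IH hy.
case: (eqVneq x bot) => hx; last by apply: hb; apply/eqP.
case: (ht x a) => hu.
  by move: hu => [t [r [w [hacc [hrw _]]]]]; exists t, r, w.
by move: hy; rewrite /step hu hx; case: d.
Qed.

Lemma sibling {Q S : finType} (A : dpta Q S) : standing_convention A ->
  forall x a d b, productive A (step A x (a, d)) -> productive A (step A x (a, b)).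
Proof.
move=> [bot [hb ht]] x a d b hy.
case: (ht x a) => hu; first exact: used_child.
by move: hy; rewrite /step hu /=; case: d; case: b.
Qed.

Lemma prod_good {Q S : finType} {A : dpta Q S} {z} :
  productive A z -> exists t, run_accepting A (runof A z t).
Proof.
move=> [t [r [w [[hrun hacc] hz]]]].
exists (fun u => t (w ++ u)).
have -> : runof A z (fun u => t (w ++ u)) = fun u => r (w ++ u).
  apply: functional_extensionality => u.
  by rewrite (@run_runof _ _ A _ t r hrun) runof_cat -(@run_runof _ _ A _ t r hrun w) hz.
exact: accepting_sub.
Qed.

Definition mk {S : Type} (a : S) (tl tr : node -> S) : node -> S :=
  fun v => match v with [::] => a | b :: w => if b then tr w else tl w end.

Lemma runof_mk {Q S : finType} (A : dpta Q S) x a tl tr b w :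
  runof A x (mk a tl tr) (b :: w) = runof A (step A x (a, b)) (if b then tr else tl) w.
Proof. by case: b. Qed.

Lemma acc_mk {Q S : finType} (A : dpta Q S) x a tl tr :
  run_accepting A (runof A (step A x (a, false)) tl) ->
  run_accepting A (runof A (step A x (a, true)) tr) ->
  run_accepting A (runof A x (mk a tl tr)).
Proof.
move=> hl hr pi; apply/(accs_shift 1).
under [X in accs X]functional_extensionality => n.
  rewrite add1n path_node_S runof_mk.
over.
by case: (pi 0); [exact: hr | exact: hl].
Qed.

Lemma FP {Q S : finType} (A : dpta Q S) : standing_convention A ->
  forall s x t2, productive A (path_end A x s) ->
  run_accepting A (runof A (path_end A x s) t2) ->
  exists t, run_accepting A (runof A x t) /\
    runof A x t (map snd s) = path_end A x s /\
    (forall u, t (map snd s ++ u) = t2 u).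
Proof.
move=> hc; elim=> [|[a d] s IH] x t2 hp ha.
  by exists t2.
move: hp ha; rewrite /path_end /= -/(path_end A _ _) => hp ha.
have [ty [hty [hry hsy]]] := IH _ _ hp ha.
have hyp := @reach _ _ A hc _ _ hp.
have [tz htz] := prod_good (@sibling _ _ A hc _ _ _ (~~ d) hyp).
exists (mk a (if d then tz else ty) (if d then ty else tz)); split; [|split].
- by apply: acc_mk; case: d hty htz hyp {hry hsy hp ha} => /=.
- by case: d hty hry hsy {hyp htz hp ha}.
- by move=> u /=; case: d hty hry hsy {hyp htz hp ha} => /= _ _ ->.
Qed.

Fixpoint spine {S : Type} (sig : nat -> S) (dir : nat -> bool) (plug : nat -> node -> S)
  (i : nat) (v : node) : S :=
  match v with
  | [::] => sig i
  | b :: w => if b == dir i then spine sig dir plug i.+1 w else plug i w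
  end.

Lemma bigmax_att {T : eqType} (s : seq T) (F : T -> nat) :
  s != [::] -> exists2 x, x \in s & F x = \max_(x <- s) F x.
Proof.
elim: s => [|x s IH] // _; rewrite big_cons.
case: (eqVneq s [::]) => [->|hs].
  by exists x; rewrite ?mem_head // big_nil maxn0.
have [y hy e] := IH hs.
case: (leqP (F x) (\max_(x <- s) F x)) => h.
  by exists y; rewrite ?inE ?hy ?orbT // -e (maxn_idPr h) e.
by exists x; rewrite ?mem_head // (maxn_idPl (ltnW h)).
Qed.

Lemma noprefix (P X Y : node) b b' : b != b' -> ~~ prefix (P ++ b :: X) (P ++ b' :: Y).
Proof. by move=> h; rewrite prefix_catr // eqxx prefix_cons /= (negbTE h). Qed.

Lemma ltn_ex x y : x < y -> exists m, y = x + m.+1.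
Proof. move=> h; exists (y - x).-1; by rewrite prednK ?subn_gt0 // subnKC // ltnW. Qed.

Lemma spine_lemma {Q S : finType} (A : dpta Q S) (hc : standing_convention A)
  q e0 s0 (hloop : path_end A q (e0 :: s0) = q) (hacc : loop_accepting A q (e0 :: s0))
  (hq : productive A q) TR
  (hTR : run_accepting A (runof A (step A q (e0.1, ~~ e0.2)) TR)) :
  exists T (c : nat -> node), run_accepting A (runof A q T) /\
    (forall k u, runof A q T (c k ++ u) = runof A (step A q (e0.1, ~~ e0.2)) TR u) /\
    (forall i j u v, i <> j -> ~~ prefix (c i ++ u) (c j ++ v)).
Proof.
set L := e0 :: s0. set l := size L.
have l0 : 0 < l by [].
pose lab i := nth e0 L (i %% l).
pose dir i := (lab i).2. pose sig i := (lab i).1.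
pose st i := path_end A q (take (i %% l) L).
pose sib i := step A (st i) (sig i, ~~ dir i).
have [G hG] : exists G : Q -> node -> S,
    forall y, productive A y -> run_accepting A (runof A y (G y)).
  apply: (@choice_fun Q (node -> S) (fun y t => productive A y -> run_accepting A (runof A y t))) => y; case: (classic (productive A y)) => hy.
    have [t ht] := prod_good hy; by exists t.
  by exists (fun _ => e0.1).
pose plug i := if i %% l == 0 then TR else G (sib i).
have st0 : st 0 = q by [].
have st_step : forall i, step A (st i) (sig i, dir i) = st i.+1.
  move=> i; have -> : (sig i, dir i) = lab i by rewrite /sig /dir; case: (lab i).
  have hj : i %% l < l := ltn_pmod i l0.
  rewrite /st /lab /path_end -foldl_rcons -take_nth //.
  rewrite -[i.+1]addn1 -modnDml addn1.
  case: (ltngtP (i %% l).+1 l) => h.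
  - by rewrite (modn_small h).
  - by move: h; rewrite ltnS leqNgt hj.
  - by rewrite h modnn take_size.
have F2 : forall i b w, runof A (st i) (spine sig dir plug i) (b :: w) =
    if b == dir i then runof A (st i.+1) (spine sig dir plug i.+1) w
    else runof A (sib i) (plug i) w.
  move=> i b w /=; case: (eqVneq b (dir i)) => [->|hb].
    by rewrite st_step.
  idtac.
  have e : b = ~~ dir i by move: hb; case: b; case: (dir i).
  by rewrite /sib -e.
have F3 : forall n i u,
    runof A (st i) (spine sig dir plug i) (path_node (fun k => dir (i + k)) n ++ u) =
    runof A (st (i + n)) (spine sig dir plug (i + n)) u.
  elim=> [|n IH] i u; first by rewrite addn0.
  rewrite path_node_S cat_cons F2 addn0 eqxx.
  have -> : (fun j => dir (i + j.+1)) = (fun k => dir (i.+1 + k)).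
    by apply: functional_extensionality => k; rewrite addSnnS.
  by rewrite IH addSnnS.
have st_prod : forall j, productive A (st j).
  move=> j; apply: (@reach _ _ A hc (drop (j %% l) L)).
  by rewrite /path_end -foldl_cat cat_take_drop -/(path_end A q L) hloop.
have sib_prod : forall j, productive A (sib j).
  move=> j; apply: (@sibling _ _ A hc _ _ (dir j)); rewrite st_step; exact: st_prod.
have modz : forall i, i %% l = 0 -> lab i = e0 /\ st i = q /\ plug i = TR /\ sib i = step A q (e0.1, ~~ e0.2).
  by move=> i hi; rewrite /plug /sib /sig /dir /st /lab hi.
exists (spine sig dir plug 0), (fun k => path_node dir (k * l) ++ [:: ~~ dir 0]).
split; [|split].
- move=> pi; rewrite -st0.
  case: (classic (forall n, pi n = dir n)) => hpi.
  + have e : forall n, runof A (st 0) (spine sig dir plug 0) (path_node pi n) = st n.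
      move=> n; rewrite (@path_node_ext pi (fun j => dir (0 + j))) => [|j _]; last by rewrite add0n hpi.
      by rewrite -[path_node _ n]cats0 F3 add0n.
    change (accs (fun n => rank A (runof A (st 0) (spine sig dir plug 0) (path_node pi n)))).
    under [X in accs X]functional_extensionality => n do rewrite e.
    set sc := scanl (step A) q L.
    have ssc : size sc = l by rewrite size_scanl.
    have H1 : forall j, j < l -> exists2 k, k < l & nth q sc k = path_end A q (take j L).
      move=> j hj; case: j hj => [|j] hj.
        exists l.-1; first by rewrite prednK.
        by rewrite nth_scanl ?prednK // take_size -/(path_end A q L) hloop.
      exists j; first exact: ltnW.
      by rewrite nth_scanl //; exact: ltnW.
    exists (\max_(x <- sc) rank A x); split; first exact: hacc.
    split; last first.
      exists 0 => n _.
      have [k hk ek] := H1 (n %% l) (ltn_pmod n l0); rewrite /st -ek.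
      by apply: leq_bigmax_seq => //; rewrite mem_nth // ssc.
    have [x hx ex] := @bigmax_att _ sc (rank A) (erefl true).
    set k := index x sc.
    have hk : k < l by rewrite -ssc index_mem.
    have hxk : st k.+1 = x.
      rewrite -(nth_index q hx) nth_scanl -?ssc // /st.
      case: (ltngtP k.+1 l) => h.
      * by rewrite (modn_small h).
      * by move: h; rewrite ltnS leqNgt hk.
      * by rewrite h modnn take_size -/(path_end A q L) hloop.
    move=> N; exists (N * l + k.+1); split.
      exact: leq_trans (leq_pmulr N l0) (leq_addr _ _).
    have -> : st (N * l + k.+1) = st k.+1 by rewrite /st modnMDl.
    by rewrite hxk.
  + have [n hn] : exists n, pi n != dir n.
      apply: NNPP => h; apply: hpi => n; apply/eqP; apply: NNPP => h'; apply: h.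
      by exists n; apply/negP.
    have exP : exists n, (fun n => pi n != dir n) n := ex_intro _ n hn.
    case: (ex_minnP exP) => n0 hn0 hmin.
    have hlt : forall k, k < n0 -> pi k = dir k.
      move=> k hk; apply/eqP; apply: contraTT hk => h; rewrite -leqNgt; exact: hmin.
    change (accs (fun n => rank A (runof A (st 0) (spine sig dir plug 0) (path_node pi n)))).
    apply/(accs_shift n0.+1).
    have e : forall k, runof A (st 0) (spine sig dir plug 0) (path_node pi (n0.+1 + k)) =
        runof A (sib n0) (plug n0) (path_node (fun j => pi (n0.+1 + j)) k).
      move=> k; rewrite path_node_split path_node_rcons cat_rcons.
      rewrite (@path_node_ext pi (fun j => dir (0 + j))) => [|j hj]; last by rewrite add0n hlt.
      by rewrite F3 add0n F2 (negbTE hn0).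
    under [X in accs X]functional_extensionality => k do rewrite e.
    case: (eqVneq (n0 %% l) 0) => hm.
      have [_ [_ [-> ->]]] := modz n0 hm; exact: hTR.
    have -> : plug n0 = G (sib n0) by rewrite /plug (negbTE hm).
    exact: hG.
- move=> k u; rewrite -catA /=.
  rewrite (@path_node_ext dir (fun j => dir (0 + j))) => [|j _]; last by rewrite add0n.
  rewrite -{1}st0 F3 add0n F2.
  have [hl [hs [hp hsi]]] := modz (k * l) (modnMl k l).
  have hd : dir (k * l) = dir 0 by rewrite /dir hl.
  rewrite hd; have -> : (~~ dir 0 == dir 0) = false by case: (dir 0).
  by rewrite hp hsi.
- have key : forall a b u v, a < b -> ~~ prefix (path_node dir (a * l) ++ [:: ~~ dir 0] ++ u)
      (path_node dir (b * l) ++ [:: ~~ dir 0] ++ v) /\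
      ~~ prefix (path_node dir (b * l) ++ [:: ~~ dir 0] ++ v)
      (path_node dir (a * l) ++ [:: ~~ dir 0] ++ u).
    move=> a b u v hab.
    have [m hm] : exists m, b * l = a * l + m.+1 by apply: ltn_ex; rewrite ltn_pmul2r.
    have hd : dir (a * l + 0) = dir 0.
      by rewrite addn0 /dir (proj1 (modz (a * l) (modnMl a l))).
    rewrite hm path_node_split path_node_S hd -catA cat_cons.
    by split; apply: noprefix; case: (dir 0).
  move=> i j u v hij; rewrite -!catA.
  case: (ltngtP i j) => h.
  - exact: (key i j u v h).1.
  - exact: (key j i v u h).2.
  - by move: hij; rewrite h.
Qed.

Theorem lemma12p3 (Q S : finType) (A : dpta Q S) (p : Q) :
  standing_convention A ->
  ((exists (t : node -> S) (r : node -> Q),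
      accepting_run A t r /\ occurs_inf_incomparable r p)
   <-> (productive A p /\ replicated_by_accepting_loop A p)).
Proof.
move=> hc; split.
  move=> [t [r [hr ho]]]; split; last exact: forward hr ho.
  by move: ho => [f [hf _]]; exists t, r, (f 0); rewrite hf.
move=> [hp [q [sg [d0 [s [[_ hloop] [hacc [s' hrep]]]]]]]].
move: hrep; rewrite /path_end /= -/(path_end A _ _) => hrep.
have hq : productive A q.
  apply: (@reach _ _ A hc [:: (sg, ~~ d0) & s']).
  by rewrite /path_end /= -/(path_end A _ _) hrep.
have [tp htp] := prod_good hp.
have := @FP _ _ A hc s' (step A q (sg, ~~ d0)) tp; rewrite hrep.
move=> /(_ hp htp) [TR [hTR [hTRp _]]].
have [T [c [hT [hTc hTi]]]] := @spine_lemma _ _ A hc q (sg, d0) s hloop hacc hq TR hTR.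
move: hq => [t1 [r1 [w1 [[hrun1 hacc1] hrw]]]].
have [s1 hs1] := @run_path _ _ A _ t1 r1 hrun1 w1 [::].
move: hs1; rewrite (proj1 hrun1) hrw /= => hs1.
have := @FP _ _ A hc s1 (init A) T; rewrite hs1.
move=> /(_ _ hT) [|T0 [hT0 [hT0q hT0s]]]; first by exists t1, r1, w1.
exists T0, (runof A (init A) T0); split; first by split; [exact: runof_run|].
exists (fun k => map snd s1 ++ (c k ++ map snd s')); split.
  move=> k; rewrite runof_cat hT0q.
  have -> : (fun u => T0 (map snd s1 ++ u)) = T by apply: functional_extensionality.
  by rewrite hTc.
move=> i j hij; rewrite prefix_catr // eqxx /=; exact: hTi.
Qed.
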